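(* Let $\mathbf{RN}$ be a regulatory network, $z$ a regular parameter and $\ell$ the associated wall-labeling. Let $\mathcal F_W$, $\mathcal F_{WD}$ and $\mathcal F_D$ be the wall graph, wall-domain graph and domain graph induced by $\ell$. Then the Morse graphs $\mathsf{MG}(\mathcal F_W)$, $\mathsf{MG}(\mathcal F_{WD})$ and $\mathsf{MG}(\mathcal F_D)$ are isomorphic.
   Context: Regulatory network: $\mathbf{RN}=(V,E)$, $V=\{1,\dots,N\}$. Edges $(i,j)$ are activations $i\to j$ or repressions $i\dashv j$, with at most one per ordered pair and (standing assumption) no $i\dashv i$. Set $\mathbf S(n)=\{i:(i,n)\in E\}$ and $\mathbf T(n)=\{j:(n,j)\in E\}$. Node $j$ has a logic $M_j$ (the polynomial from an AND/OR expression without negation using each variable of $\mathbf S(j)$ once, via AND $\mapsto$ product and OR $\mapsto$ sum). Parameter: $z=(l,u,\theta,\gamma)$, consisting of $l_{j,i},u_{j,i},\theta_{j,i}$ per edge $(i,j)$ and $\gamma_i$ per node. Switching nonlinearity: $\sigma_{j,i}(x)=l_{j,i}$ if ($i\to j$, $x_i<\theta_{j,i}$) or ($i\dashv j$, $x_i>\theta_{j,i}$). It equals $u_{j,i}$ if ($i\to j$, $x_i>\theta_{j,i}$) or ($i\dashv j$, $x_i<\theta_{j,i}$). $\Lambda_j(x)=M_j((\sigma_{j,i}(x))_{i\in\mathbf S(j)})$. Fundamental cells: with $\theta_{-\infty,i}=0$ and $\theta_{\infty,i}=\infty$, a cell is $\kappa=\prod_i(\theta_{a_i,i},\theta_{b_i,i})$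 with consecutive thresholds. $\Lambda(\kappa)$ is the constant value of $\Lambda$ on $\kappa$. Left faces (for $a_k\in V$) replace the $k$-th factor by $\{\theta_{a_k,k}\}$; right faces (for $b_k\in V$) use $\{\theta_{b_k,k}\}$. Each face has projection index $k$ and switching index $a_k$ resp. $b_k$. Regular parameter: - $0<l<u$, $\gamma>0$ and $\theta>0$; - distinct $\theta_{j,i}$ for fixed $i$; - $\Lambda_i(\kappa)\ne\gamma_i\theta_{j,i}$ for each face threshold $\theta_{j,i}$ of $\kappa$. A cell $\kappa$ is attracting if $\Gamma^{-1}\Lambda(\kappa)\in\kappa$, where $\Gamma=\mathrm{diag}(\gamma_i)$. Walls: a wall is a pair $(\tau,\kappa)$ with $\tau$ a face of $\kappa$. $\mathrm{sgn}(\tau,\kappa)=\pm1$ for left/right faces. $\ell(\tau,\kappa)=\mathrm{sgn}(\tau,\kappa)\,\mathrm{sgn}(-\gamma_i\theta_{j,i}+\Lambda_i(\kappa))$ ($i$ projection index, $j$ switching index). $\ell=1$ means entrance and $\ell=-1$ absorbing. Wall graph: its vertices are the attracting cells and all faces of all cells. There is an edge $\tau\to\tau'$ whenever some cell $\kappa$ has $(\tau,\kappa)$ entrance and $(\tau',\kappa)$ absorbing. For each attracting $\kappa$ there are edges $\kappa\to\kappa$ and $\tau\to\kappa$ for every wall $(\tau,\kappa)$. Domain graph: its vertices are all cells. There is an edge $\kappa\to\kappa$ if $\kappa$ is attracting, and an edge $\kappa\to\kappa'$ if some face $\tau$ has $(\tau,\kappa)$ absorbing and $(\tau,\kappa')$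 entrance. Wall-domain graph: its vertices are all cells and all faces. There is an edge $\kappa\to\tau$ if $(\tau,\kappa)$ is absorbing, an edge $\tau\to\kappa$ if $(\tau,\kappa)$ is entrance, and an edge $\kappa\to\kappa$ if $\kappa$ is attracting. Morse graph of a directed graph $\mathcal F$: - A recurrent component (Morse set) is a maximal vertex set $\mathcal C$ such that for all $u,v\in\mathcal C$ there is a non-empty path from $u$ to $v$ within $\mathcal C$. - Morse sets are partially ordered by $q\le p$ iff there is a path in $\mathcal F$ from an element of $\mathcal M(p)$ to an element of $\mathcal M(q)$. - $\mathsf{MG}(\mathcal F)$ is the Hasse diagram of this poset. *)

(* Defs.v *)
From HB Require Import structures.
From mathcomp Require Import all_boot all_order all_algebra.
Set Implicit Arguments. Unset Strict Implicit. Unset Printing Implicit Defensive.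
Import Order.TTheory GRing.Theory Num.Theory.
Local Open Scope ring_scope.

Inductive lexpr (N : nat) : Type :=
| LVar of 'I_N
| LAnd of lexpr N & lexpr N
| LOr of lexpr N & lexpr N.

Fixpoint lvars N (e : lexpr N) : seq 'I_N :=
  match e with
  | LVar i => [:: i]
  | LAnd a b => lvars a ++ lvars b
  | LOr a b => lvars a ++ lvars b
  end.

(* the polynomial M_j: AND |-> product, OR |-> sum *)
Fixpoint leval (R : realFieldType) N (s : 'I_N -> R) (e : lexpr N) : R :=
  match e with
  | LVar i => s i
  | LAnd a b => leval s a * leval s b
  | LOr a b => leval s a + leval s b
  end.

(* rn_edge i j = Some true : activation i -> j;  Some false : repression i -| j;
   None : no edge (i,j).  At most one edge per ordered pair is built in. *)
Record network (N : nat) := Network {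
  rn_edge : 'I_N -> 'I_N -> option bool;
  rn_logic : 'I_N -> lexpr N }.

Definition srcs N (rn : network N) (n : 'I_N) : {set 'I_N} :=
  [set i | rn_edge rn i n != None].
Definition tgts N (rn : network N) (n : 'I_N) : {set 'I_N} :=
  [set j | rn_edge rn n j != None].

Definition network_ok N (rn : network N) : Prop :=
  (forall i, rn_edge rn i i != Some false) /\
  (forall j, perm_eq (lvars (rn_logic rn j)) (enum (srcs rn j))).

(* parameter z = (l,u,theta,gamma); pl j i = l_{j,i} etc. for edge (i,j) *)
Record param (R : realFieldType) (N : nat) := Param {
  pl : 'I_N -> 'I_N -> R;
  pu : 'I_N -> 'I_N -> R;
  pth : 'I_N -> 'I_N -> R;
  pgam : 'I_N -> R }.

(* a cell: for each i the pair (a_i, b_i); None encodes -oo (resp. +oo) *)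
Definition cell N := {ffun 'I_N -> option 'I_N * option 'I_N}.
(* a face: (projection index k, switching index s, the other factors;
   the k-th factor of the last component is normalised to (None,None)) *)
Definition face N := ('I_N * 'I_N * cell N)%type.
Definition vtx N := (cell N + face N)%type.

Section Dynamics.
Variables (R : realFieldType) (N : nat) (rn : network N) (z : param R N).

Definition below (x : R) (h : option R) : bool :=
  if h is Some y then x < y else true.

(* theta_{a_i,i} (with theta_{-oo,i} = 0) and theta_{b_i,i} (None = oo) *)
Definition lo (c : cell N) i : R :=
  if (c i).1 is Some j then pth z j i else 0.
Definition hi (c : cell N) i : option R :=
  if (c i).2 is Some j then Some (pth z j i) else None.

(* c is a fundamental cell: thresholds of i's factor are thresholds of i
   and are consecutive *)
Definition cell_ok (c : cell N) : bool :=
  [forall i, [&& (if (c i).1 is Some j then j \in tgts rn i else true),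
                 (if (c i).2 is Some j then j \in tgts rn i else true),
                 below (lo c i) (hi c i) &
                 [forall j in tgts rn i,
                     ~~ ((lo c i < pth z j i) && below (pth z j i) (hi c i))]]].

(* switching nonlinearity sigma_{j,i}(x); its value when x_i = theta_{j,i}
   is unspecified in the paper and never used below *)
Definition sigma (j i : 'I_N) (x : 'I_N -> R) : R :=
  match rn_edge rn i j with
  | Some true => if x i < pth z j i then pl z j i
                 else if pth z j i < x i then pu z j i else 0
  | Some false => if pth z j i < x i then pl z j i
                  else if x i < pth z j i then pu z j i else 0
  | None => 0
  end.

Definition Lam (j : 'I_N) (x : 'I_N -> R) : R :=
  leval (fun i => sigma j i x) (rn_logic rn j).

Definition rep (c : cell N) : 'I_N -> R :=
  fun i => if hi c i is Some h then (lo c i + h) / 2 else lo c i + 1.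

(* Lambda(kappa): the (constant) value of Lambda on kappa *)
Definition LamC (c : cell N) (j : 'I_N) : R := Lam j (rep c).

Definition collapse (c : cell N) (k : 'I_N) : cell N :=
  [ffun i => if i == k then (None, None) else c i].

Definition is_left (t : face N) (c : cell N) : bool :=
  let: (k, s, f) := t in [&& cell_ok c, (c k).1 == Some s & f == collapse c k].
Definition is_right (t : face N) (c : cell N) : bool :=
  let: (k, s, f) := t in [&& cell_ok c, (c k).2 == Some s & f == collapse c k].
Definition is_face (t : face N) (c : cell N) : bool := is_left t c || is_right t c.

Definition ell (t : face N) (c : cell N) : R :=
  let: (k, s, _) := t in
  (if is_left t c then 1 else -1) * Num.sg (- (pgam z k * pth z s k) + LamC c k).

Definition entrance (t : face N) (c : cell N) : bool := is_face t c && (ell t c == 1).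
Definition absorbing (t : face N) (c : cell N) : bool := is_face t c && (ell t c == -1).

Definition attracting (c : cell N) : bool :=
  cell_ok c && [forall i, (lo c i < LamC c i / pgam z i) &&
                           below (LamC c i / pgam z i) (hi c i)].

Definition regular : Prop :=
  [/\ (forall i j, rn_edge rn i j != None ->
          [/\ 0 < pl z j i, pl z j i < pu z j i & 0 < pth z j i]),
      (forall i, 0 < pgam z i),
      (forall i j j', j \in tgts rn i -> j' \in tgts rn i ->
          pth z j i = pth z j' i -> j = j') &
      (forall (c : cell N) i j, cell_ok c ->
          ((c i).1 == Some j) || ((c i).2 == Some j) ->
          LamC c i != pgam z i * pth z j i)].

(* Wall graph.  Vertices: attracting cells and all faces (other cells are
   isolated, carry no edges). *)
Definition wall_graph : rel (vtx N) := fun x y =>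
  match x, y with
  | inr t, inr t' => [exists c, entrance t c && absorbing t' c]
  | inl c, inl c' => (c == c') && attracting c
  | inr t, inl c => attracting c && is_face t c
  | inl _, inr _ => false
  end.

Definition domain_graph : rel (vtx N) := fun x y =>
  match x, y with
  | inl c, inl c' => ((c == c') && attracting c) ||
                     [exists t, absorbing t c && entrance t c']
  | _, _ => false
  end.

Definition wall_domain_graph : rel (vtx N) := fun x y =>
  match x, y with
  | inl c, inr t => absorbing t c
  | inr t, inl c => entrance t c
  | inl c, inl c' => (c == c') && attracting c
  | inr _, inr _ => false
  end.

End Dynamics.

Section Morse.
Variables (T : finType) (e : rel T).

Definition restrict (C : {set T}) : rel T :=
  fun x y => [&& x \in C, y \in C & e x y].

Definition recurrent_set (C : {set T}) : bool :=
  [forall u in C, forall v in C,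
     exists w, restrict C u w && connect (restrict C) w v].

Definition morse_set (C : {set T}) : bool :=
  maxset (fun D : {set T} => (D != set0) && recurrent_set D) C.

(* morse_le q p  <=>  q <= p  <=>  path in the graph from an element of p to
   an element of q *)
Definition morse_le (q p : {set T}) : bool :=
  [exists x in p, exists y in q, connect e x y].

Definition hasse (p q : {set T}) : bool :=
  [&& morse_set p, morse_set q, p != q, morse_le q p &
      ~~ [exists r, [&& morse_set r, r != p, r != q, morse_le q r & morse_le r p]]].

End Morse.

Definition morse_iso (T : finType) (e1 e2 : rel T) : Prop :=
  exists f : {set T} -> {set T},
    [/\ forall p, morse_set e1 p -> morse_set e2 (f p),
        forall p q, morse_set e1 p -> morse_set e1 q -> f p = f q -> p = q,
        forall q, morse_set e2 q -> exists2 p, morse_set e1 p & f p = q &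
        forall p q, morse_set e1 p -> morse_set e1 q ->
          hasse e1 p q = hasse e2 (f p) (f q)].

(* Main.v *)
Require Import Defs.
From HB Require Import structures.
From mathcomp Require Import all_boot all_order all_algebra.
Set Implicit Arguments. Unset Strict Implicit. Unset Printing Implicit Defensive.

Definition tc (T : finType) (e : rel T) x y := [exists w, e x w && connect e w y].
Definition scc (T : finType) (e : rel T) x : {set T} :=
  [set y | connect e x y && connect e y x].

Lemma tc_connect (T : finType) (e : rel T) x y : tc e x y -> connect e x y.
Proof. by case/existsP=> w /andP[exw cwy]; apply: connect_trans (connect1 exw) cwy. Qed.

Lemma tc_conn (T : finType) (e : rel T) x y z : tc e x y -> connect e y z -> tc e x z.
Proof. by case/existsP=> w /andP[exw cwy] cyz; apply/existsP; exists w; rewrite exw (connect_trans cwy cyz). Qed.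

Lemma conn_tc (T : finType) (e : rel T) x y z : connect e x y -> tc e y z -> tc e x z.
Proof.
case/connectP=> [[|w p]] /= => [_ -> //|/andP[exw pw] ->] tyz.
apply/existsP; exists w; rewrite exw /=.
apply: connect_trans (tc_connect tyz); apply/connectP; by exists p.
Qed.

Lemma connect_tc (T : finType) (e : rel T) x y : connect e x y -> x = y \/ tc e x y.
Proof.
case/connectP=> [[|w p]] /= => [_ ->|/andP[exw pw] ->]; first by left.
right; apply/existsP; exists w; rewrite exw; apply/connectP; by exists p.
Qed.

Lemma tcP (T : finType) (e : rel T) x y : tc e x y ->
  exists p, [/\ path e x p, last x p = y & p != [::]].
Proof.
case/existsP=> w /andP[exw /connectP[p pw ->]]; exists (w :: p); by rewrite /= exw.
Qed.

Lemma in_scc (T : finType) (e : rel T) x y : (y \in scc e x) = connect e x y && connect e y x.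
Proof. by rewrite inE. Qed.

Lemma scc_self (T : finType) (e : rel T) x : x \in scc e x.
Proof. by rewrite in_scc connect0. Qed.

Lemma scc_eq (T : finType) (e : rel T) x y : y \in scc e x -> scc e y = scc e x.
Proof.
rewrite in_scc => /andP[cxy cyx]; apply/setP=> u; rewrite !in_scc.
apply/andP/andP=> [[a b]|[a b]]; split.
- exact: connect_trans cxy a.
- exact: connect_trans b cyx.
- exact: connect_trans cyx a.
- exact: connect_trans b cxy.
Qed.

Lemma scc_eqP (T : finType) (e : rel T) x y : scc e x = scc e y -> connect e x y && connect e y x.
Proof. move=> E; have := scc_self e y; rewrite -E in_scc. by case/andP=> -> ->. Qed.

Definition cyc (T : finType) (e : rel T) x := tc e x x.

Lemma cyc_scc (T : finType) (e : rel T) x y : cyc e x -> y \in scc e x -> cyc e y.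
Proof.
rewrite in_scc /cyc => cx /andP[cxy cyx].
exact: conn_tc cyx (tc_conn cx cxy).
Qed.

Lemma restrict_scc (T : finType) (e : rel T) x a b : a \in scc e x -> b \in scc e x ->
  connect e a b -> connect (restrict e (scc e x)) a b.
Proof.
move=> ha hb /connectP[p pa eb]; subst b.
elim: p a ha pa hb => [|w p IH] a ha /=; first by rewrite connect0.
case/andP=> eaw pw hl.
have hw : w \in scc e x.
  move: ha hl; rewrite !in_scc => /andP[cxa cax] /andP[cxl clx].
  rewrite (connect_trans cxa (connect1 eaw)) /=.
  apply: connect_trans clx; apply/connectP; by exists p.
apply: connect_trans (IH w hw pw hl); apply: connect1.
by rewrite /restrict ha hw eaw.
Qed.

Lemma ms_scc (T : finType) (e : rel T) x : cyc e x -> morse_set e (scc e x).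
Proof.
move=> cx.
have recx : recurrent_set e (scc e x).
  apply/forallP=> u; apply/implyP=> hu; apply/forallP=> v; apply/implyP=> hv.
  have cu := cyc_scc cx hu.
  case/existsP: cu => w /andP[euw cwu].
  have hw : w \in scc e x.
    move: hu; rewrite !in_scc => /andP[cxu cux].
    by rewrite (connect_trans cxu (connect1 euw)) (connect_trans cwu cux).
  apply/existsP; exists w; rewrite /restrict hu hw euw /=.
  apply: (restrict_scc hw hv).
  move: hu hv; rewrite !in_scc => /andP[_ cux] /andP[cxv _].
  exact: connect_trans cwu (connect_trans cux cxv).
apply/maxsetP; split.
  rewrite recx andbT; apply/set0Pn; exists x; exact: scc_self.
move=> B /andP[B0 recB] sub; apply/eqP; rewrite eqEsubset sub andbT.
apply/subsetP=> y hy.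
have hx : x \in B by apply: (subsetP sub); exact: scc_self.
have conB : forall a b, a \in B -> b \in B -> connect e a b.
  move=> a b ha hb.
  move/forallP: recB => /(_ a) /implyP /(_ ha) /forallP /(_ b) /implyP /(_ hb).
  case/existsP=> w /andP[/and3P[_ _ eaw] cw].
  apply: connect_trans (connect1 eaw) _.
  apply: connect_sub cw => p q /and3P[_ _ epq]; exact: connect1.
by rewrite in_scc conB ?conB.
Qed.

Lemma ms_inv (T : finType) (e : rel T) C x : morse_set e C -> x \in C ->
  cyc e x /\ C = scc e x.
Proof.
case/maxsetP=> /andP[C0 recC] maxC hr.
have conC : forall a b, a \in C -> b \in C -> tc e a b.
  move=> a b ha hb.
  move/forallP: recC => /(_ a) /implyP /(_ ha) /forallP /(_ b) /implyP /(_ hb).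
  case/existsP=> w /andP[/and3P[_ _ eaw] cw].
  apply/existsP; exists w; rewrite eaw /=.
  apply: connect_sub cw => p q /and3P[_ _ epq]; exact: connect1.
have cx : cyc e x by apply: conC.
split=> //.
have := ms_scc cx => /maxsetP[/andP[_ recS] _].
apply: esym; apply: maxC; first by rewrite recS andbT; apply/set0Pn; exists x; exact: scc_self.
apply/subsetP=> y hy; rewrite in_scc !tc_connect // conC //.
Qed.

Lemma ms_nonempty (T : finType) (e : rel T) C : morse_set e C -> exists x, x \in C.
Proof. by case/maxsetP=> /andP[/set0Pn[x hx] _] _; exists x. Qed.

Lemma msP (T : finType) (e : rel T) C : morse_set e C <-> exists2 x, cyc e x & C = scc e x.
Proof.
split; last by case=> x cx ->; exact: ms_scc.
move=> m; case: (ms_nonempty m) => x hx; case: (ms_inv m hx) => *; by exists x.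
Qed.

Lemma le_scc (T : finType) (e : rel T) x y : morse_le e (scc e y) (scc e x) = connect e x y.
Proof.
apply/existsP/idP=> [[a /andP[ha /existsP[b /andP[hb cab]]]]|cxy].
  move: ha hb; rewrite !in_scc => /andP[cxa _] /andP[_ cby].
  exact: connect_trans cxa (connect_trans cab cby).
exists x; rewrite scc_self /=; apply/existsP; exists y; by rewrite scc_self.
Qed.

Definition Fmap (T : finType) (e2 : rel T) (g : T -> T) (C : {set T}) : {set T} :=
  if [pick x in C] is Some x then scc e2 (g x) else set0.

Lemma Fspec (T : finType) (e1 e2 : rel T) g C : morse_set e1 C ->
  exists x, [/\ cyc e1 x, C = scc e1 x & Fmap e2 g C = scc e2 (g x)].
Proof.
move=> m; rewrite /Fmap; case: pickP => [x hx|none].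
  by case: (ms_inv m hx) => cx ->; exists x.
by case: (ms_nonempty m) => x hx; move: (none x); rewrite hx.
Qed.

Lemma hasse_transfer (T : finType) (e1 e2 : rel T) (f : {set T} -> {set T}) :
  (forall p, morse_set e1 p -> morse_set e2 (f p)) ->
  (forall p q, morse_set e1 p -> morse_set e1 q -> f p = f q -> p = q) ->
  (forall q, morse_set e2 q -> exists2 p, morse_set e1 p & f p = q) ->
  (forall p q, morse_set e1 p -> morse_set e1 q -> morse_le e1 q p = morse_le e2 (f q) (f p)) ->
  morse_iso e1 e2.
Proof.
move=> Hm Hi Hs Hl; exists f; split; [exact: Hm | exact: Hi | exact: Hs | move=> p q mp mq].
rewrite /hasse mp mq (Hm p mp) (Hm q mq) -Hl //.
have -> : (p != q) = (f p != f q).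
  case E: (p == q); first by move/eqP: E => ->; rewrite eqxx.
  case E': (f p == f q) => //; by rewrite (Hi _ _ mp mq (eqP E')) eqxx in E.
set A := [exists r, _]; set B := [exists r, _].
suff -> : A = B by [].
rewrite /A /B; apply/existsP/existsP=> [[r /and5P[mr rp rq l1 l2]]|[r /and5P[mr rp rq l1 l2]]].
  exists (f r); rewrite Hm //= -!Hl // l1 l2 !andbT.
  apply/andP; split; apply/negP=> /eqP E.
    by move: rp; rewrite (Hi _ _ mr mp E) eqxx.
  by move: rq; rewrite (Hi _ _ mr mq E) eqxx.
case: (Hs r mr) => r' mr' E; subst r.
exists r'; rewrite mr' /= !Hl // l1 l2 !andbT.
by apply/andP; split; apply/negP=> /eqP E; [move: rp|move: rq]; rewrite E eqxx.
Qed.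

Lemma iso_of (T : finType) (e1 e2 : rel T) (g : T -> T) :
  (forall x, cyc e1 x -> cyc e2 (g x)) ->
  (forall y, cyc e2 y -> exists2 x, cyc e1 x & connect e2 y (g x) && connect e2 (g x) y) ->
  (forall x y, cyc e1 x -> cyc e1 y -> connect e1 x y = connect e2 (g x) (g y)) ->
  morse_iso e1 e2.
Proof.
move=> Hc Hs Hconn.
apply: (@hasse_transfer _ _ _ (Fmap e2 g)).
- move=> p /(Fspec e2 g) [x [cx _ ->]]; exact: ms_scc (Hc _ cx).
- move=> p q /(Fspec e2 g) [x [cx -> ->]] /(Fspec e2 g) [y [cy -> ->]] /scc_eqP.
  rewrite -!Hconn // => cc; apply: esym; apply: scc_eq; by rewrite in_scc.
- move=> q /msP [y cy ->].
  case: (Hs y cy) => x cx cc.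
  exists (scc e1 x); first exact: ms_scc.
  case: (Fspec e2 g (ms_scc cx)) => x' [cx' E ->].
  have : x \in scc e1 x' by rewrite -E scc_self.
  rewrite in_scc !Hconn // => cc'.
  apply: scc_eq; move: cc cc'; rewrite !in_scc => /andP[a b] /andP[c d].
  by rewrite (connect_trans a d) (connect_trans c b).
- move=> p q /(Fspec e2 g) [x [cx -> ->]] /(Fspec e2 g) [y [cy -> ->]].
  by rewrite !le_scc Hconn.
Qed.

Lemma iso_trans (T : finType) (e1 e2 e3 : rel T) :
  morse_iso e1 e2 -> morse_iso e2 e3 -> morse_iso e1 e3.
Proof.
case=> f [m1 i1 s1 h1] [g [m2 i2 s2 h2]].
exists (g \o f); split=> /=.
- by move=> p mp; apply: m2; apply: m1.
- move=> p q mp mq E; apply: (i1 p q mp mq); exact: (i2 (f p) (f q) (m1 p mp) (m1 q mq) E).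
- move=> q mq; case: (s2 q mq) => r mr <-; case: (s1 r mr) => p mp <-; by exists p.
- move=> p q mp mq; rewrite (h1 p q mp mq); exact: (h2 _ _ (m1 p mp) (m1 q mq)).
Qed.

Lemma iso_sym (T : finType) (e1 e2 : rel T) : morse_iso e1 e2 -> morse_iso e2 e1.
Proof.
case=> f [m1 i1 s1 h1].
pose g q := if [pick p | morse_set e1 p && (f p == q)] is Some p then p else q.
have gP : forall q, morse_set e2 q -> morse_set e1 (g q) /\ f (g q) = q.
  move=> q mq; rewrite /g; case: pickP => [p /andP[mp /eqP //]|none].
  case: (s1 q mq) => p mp E; by move: (none p); rewrite mp E eqxx.
exists g; split.
- by move=> q /gP [].
- move=> p q mp mq E; case: (gP p mp) => _ <-; case: (gP q mq) => _ <-; by rewrite E.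
- move=> p mp; exists (f p); first exact: m1.
  by case: (gP (f p) (m1 p mp)) => mg E; apply: i1.
- move=> p q mp mq; case: (gP p mp) => mgp Ep; case: (gP q mq) => mgq Eq.
  by rewrite h1 // Ep Eq.
Qed.

Lemma reduce_iso (T : finType) (e f : rel T) (K : pred T) :
  (forall x y, f x y -> [&& K x, K y & tc e x y]) ->
  (forall x y, K x -> K y -> e x y -> f x y) ->
  (forall x y y', K x -> ~~ K y -> e x y -> e y y' -> f x y') ->
  (forall x w, ~~ K x -> e x w -> K w) ->
  morse_iso f e.
Proof.
move=> H1 H2 H3 H4.
have tcfe : forall x y, tc f x y -> tc e x y.
  move=> x y /existsP[w /andP[fxw cwy]].
  case/and3P: (H1 _ _ fxw) => _ _ t; apply: tc_conn t _.
  apply: connect_sub cwy => a b fab; apply: tc_connect; by case/and3P: (H1 _ _ fab).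
have main : forall n p x, size p <= n -> K x -> path e x p -> K (last x p) ->
    p != [::] -> tc f x (last x p).
  elim=> [|n IH] [|y1 p] x //= sz Kx /andP[exy pp] Kl _.
  case Ky: (K y1).
    have fx := H2 _ _ Kx Ky exy.
    case: p sz pp Kl => [|y2 p] sz pp Kl /=.
      by apply/existsP; exists y1; rewrite fx connect0.
    apply/existsP; exists y1; rewrite fx /=.
    apply: tc_connect; exact: (IH (y2 :: p) y1).
  case: p sz pp Kl => [|y2 p] sz /=; first by rewrite Ky.
  case/andP=> ey2 pp Kl.
  have Ky2 := H4 _ _ (negbT Ky) ey2.
  have fx := H3 _ _ _ Kx (negbT Ky) exy ey2.
  case: p sz pp Kl => [|y3 p] sz pp Kl /=.
    by apply/existsP; exists y2; rewrite fx connect0.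
  apply/existsP; exists y2; rewrite fx /=.
  apply: tc_connect; apply: (IH (y3 :: p) y2) => //.
  by move: sz => /= sz; apply: ltnW.
have tcef : forall x y, K x -> K y -> tc e x y -> tc f x y.
  move=> x y Kx Ky /tcP [p [pp ey p0]]; subst y; exact: (main (size p)).
have connef : forall x y, K x -> K y -> connect e x y = connect f x y.
  move=> x y Kx Ky; apply/idP/idP.
    by case/connect_tc=> [->|t]; [exact: connect0 | apply: tc_connect; apply: tcef].
  move=> c; apply: connect_sub c => a b fab; apply: tc_connect.
  by case/and3P: (H1 _ _ fab).
have cycK : forall x, cyc f x -> K x.
  by move=> x /existsP[w /andP[fxw _]]; case/and3P: (H1 _ _ fxw).
apply: (@iso_of _ _ _ id).
- by move=> x; apply: tcfe.
- move=> y cy.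
  case Ky: (K y).
    by exists y; [exact: tcef | rewrite connect0].
  have cy' := cy; case/existsP: cy' => w /andP[eyw cwy].
  have Kw := H4 _ _ (negbT Ky) eyw.
  have hw : w \in scc e y by rewrite in_scc connect1.
  exists w; last by rewrite connect1 //.
  exact: tcef (cyc_scc cy hw).
- by move=> x y cx cy; rewrite connef //; apply: cycK.
Qed.

Import Order.TTheory GRing.Theory Num.Theory.
Local Open Scope ring_scope.

Lemma attr_ell (R : realFieldType) (N : nat) (rn : network N) (z : param R N) t c :
  regular rn z -> attracting rn z c -> is_face rn z t c -> ell rn z t c = 1.
Proof.
case=> _ gpos _ _ /andP[_ /forallP hc].
case: t => [[k s] f] F /=.
have /andP[hlo hhi] := hc k.
have gk := gpos k.
case L: [&& cell_ok rn z c, (c k).1 == Some s & f == collapse c k].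
  move: L => /and3P[_ /eqP E _].
  move: hlo; rewrite /lo E ltr_pdivlMr // => h.
  by rewrite mul1r gtr0_sg // addrC subr_gt0 mulrC.
move: F; rewrite /is_face /= L /= => /and3P[_ /eqP E _].
move: hhi; rewrite /hi E /= ltr_pdivrMr // => h.
by rewrite ltr0_sg ?mulrNN ?mulr1 // addrC subr_lt0 mulrC.
Qed.

Theorem proposition3p15 (R : realFieldType) (N : nat) (rn : network N)
  (z : param R N) :
  network_ok rn -> regular rn z ->
  [/\ morse_iso (wall_graph rn z) (wall_domain_graph rn z),
      morse_iso (wall_domain_graph rn z) (domain_graph rn z) &
      morse_iso (wall_graph rn z) (domain_graph rn z)].
Proof.
move=> _ reg.
have n1 : ((1 : R) == -1) = false.
  by apply/negbTE; rewrite eq_sym lt_eqF // (lt_trans (ltrN10 R) ltr01).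
have aell := fun t c => @attr_ell R N rn z t c reg.
have noabs : forall t c, attracting rn z c -> absorbing rn z t c = false.
  move=> t c ac; rewrite /absorbing; case F: (is_face rn z t c) => //=.
  by rewrite aell // eq_sym -(inj_eq (@oppr_inj _)) !opprK n1.
have WWD : morse_iso (wall_graph rn z) (wall_domain_graph rn z).
  apply: (@reduce_iso _ _ _
     (fun v : vtx N => match v with inl c => attracting rn z c | inr _ => true end)).
  - move=> [c|t] [c'|t'] //=.
    + case/andP=> /eqP <- ac; rewrite ac /=; apply/existsP; exists (inl c).
      by rewrite /= eqxx ac connect0.
    + case/andP=> ac fc; rewrite ac /=; apply/existsP; exists (inl c').
      by rewrite /= /entrance fc aell // eqxx connect0.
    + case/existsP=> c /andP[en ab]; apply/existsP; exists (inl c).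
      by rewrite /= en connect1.
  - move=> [c|t] [c'|t'] //= Kx Ky.
    + by rewrite noabs.
    + by case/andP=> ->; rewrite Ky.
  - move=> x y y'; case: x => [c0|t]; case: y => [c|t1]; case: y' => [c''|t''] //= Kx nKy.
    + by case/andP=> /eqP E ac; rewrite -E ac in nKy.
    + by case/andP=> /eqP E ac; rewrite -E ac in nKy.
    + by move=> _ /andP[_ ac]; rewrite ac in nKy.
    + by move=> en ab; apply/existsP; exists c; rewrite en ab.
  - by move=> [c|t] [c'|t'] //= nK /andP[_ ac]; rewrite ac in nK.
have DWD : morse_iso (domain_graph rn z) (wall_domain_graph rn z).
  apply: (@reduce_iso _ _ _ (fun v : vtx N => if v is inl _ then true else false)).
  - move=> [c|t] [c'|t'] //=; case/orP.
      case/andP=> /eqP <- ac; apply/existsP; exists (inl c).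
      by rewrite /= eqxx ac connect0.
    case/existsP=> t /andP[ab en]; apply/existsP; exists (inr t).
    by rewrite /= ab connect1.
  - by move=> [c|t] [c'|t'] //= _ _ ->.
  - move=> [c|t] [c'|t'] // [c''|t''] //= _ _ ab en.
    by apply/orP; right; apply/existsP; exists t'; rewrite ab en.
  - by move=> [c|t] [c'|t'].
have WDD := iso_sym DWD.
split; [exact: WWD | exact: WDD | exact: (iso_trans WWD WDD)].
Qed.
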